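(* Let $G=(V,E)$ be a connected simple finite graph with at least two vertices and let $p\in(0,\infty)$. There exists $f:V\to[0,\infty)$ with ${\rm Var}_p f>0$ such that $$\frac{{\rm Var}_p M_Gf}{{\rm Var}_p f}=\mathbf{C}_{G,p}.$$
   Context: For a finite connected graph $G=(V,E)$ with graph distance $d_G$ and $f:V\to\mathbb{R}$, $M_Gf(v)=\sup_{r\geq 0}\frac{1}{|B(v,r)|}\sum_{u\in B(v,r)}|f(u)|$, where $B(v,r)=\{u\in V: d_G(u,v)\le r\}$. For $g:V\to\mathbb{R}$ and $p>0$, ${\rm Var}_p g=\left(\sum_{\{v_1,v_2\}\in E}|g(v_1)-g(v_2)|^p\right)^{1/p}$, and $\mathbf{C}_{G,p}=\sup\{{\rm Var}_pM_Gf/{\rm Var}_pf:\ f:V\to\mathbb{R},\ {\rm Var}_pf>0\}$. *)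

(* Defs.v *)
From HB Require Import structures.
From mathcomp Require Import all_boot all_order all_algebra.
From mathcomp Require Import all_classical all_reals all_analysis.
Set Implicit Arguments. Unset Strict Implicit. Unset Printing Implicit Defensive.
Import Order.TTheory GRing.Theory Num.Theory.
Local Open Scope ring_scope.

Definition simple_graph (T : finType) (e : rel T) : Prop :=
  symmetric e /\ irreflexive e.

Definition connected_graph (T : finType) (e : rel T) : Prop :=
  forall x y : T, connect e x y.

(* u lies in the closed ball B(v,r) iff d_G(u,v) <= r, i.e. there is an
   e-path from v to u with at most r edges. *)
Definition in_ball (R : realType) (T : finType) (e : rel T) (v : T) (r : R)
  (u : T) : Prop :=
  exists s : seq T, [/\ path e v s, last v s = u & (size s)%:R <= r].

Definition ball_set (R : realType) (T : finType) (e : rel T) (v : T) (r : R)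
  : {set T} := [set u | `[< in_ball e v r u >] ].

Definition ball_avg (R : realType) (T : finType) (e : rel T) (f : T -> R)
  (v : T) (r : R) : R :=
  (#|ball_set e v r|%:R)^-1 * \sum_(u in ball_set e v r) `|f u|.

Definition maxfun (R : realType) (T : finType) (e : rel T) (f : T -> R)
  (v : T) : R :=
  sup [set ball_avg e f v r | r in [set r : R | 0 <= r]].

Definition is_edge (T : finType) (e : rel T) (S : {set T}) : bool :=
  [exists x, exists y, (S == [set x; y]) && e x y].

(* Var_p g = (sum_{{v1,v2} in E} |g v1 - g v2|^p)^(1/p) ; an edge S
   = {x,y} contributes |g x - g y|^p, written as (max_S g - min_S g)^p. *)
Definition edge_diff (R : realType) (T : finType) (g : T -> R) (S : {set T})
  : R :=
  \big[Order.max/0]_(x in S) \big[Order.max/0]_(y in S) `|g x - g y|.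

Definition Varp (R : realType) (T : finType) (e : rel T) (p : R) (g : T -> R)
  : R :=
  (\sum_(S : {set T} | is_edge e S) (edge_diff g S) `^ p) `^ p^-1.

(* C_{G,p} as an extended real (a priori possibly +oo) *)
Definition CGp (R : realType) (T : finType) (e : rel T) (p : R) : \bar R :=
  ereal_sup [set ((Varp e p (maxfun e f)) / (Varp e p f))%:E
            | f in [set f : T -> R | 0 < Varp e p f]].

(* Main.v *)
Require Import Defs.
From HB Require Import structures.
From mathcomp Require Import all_boot all_order all_algebra.
From mathcomp Require Import all_classical all_reals all_analysis.
From mathcomp Require Import lra.
Import Order.TTheory GRing.Theory Num.Theory.
Import numFieldTopology.Exports numFieldNormedType.Exports.
Local Open Scope classical_set_scope.
Local Open Scope ring_scope.

Section Cont.
Variables (R : realType) (X : topologicalType).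

Lemma cont_sum (I : Type) (s : seq I) (P : pred I) (F : I -> X -> R) :
  (forall i, continuous (F i)) ->
  continuous (fun x => \sum_(i <- s | P i) F i x).
Proof.
move=> HF; elim: s => [|i s IH].
  under eq_fun do rewrite big_nil; exact: cst_continuous.
under eq_fun do rewrite big_cons.
case: (P i).
  by move=> x; apply: cvgD; [exact: HF|exact: IH].
exact: IH.
Qed.

Lemma cont_bigmax (I : Type) (s : seq I) (P : pred I) (F : I -> X -> R) :
  (forall i, continuous (F i)) ->
  continuous (fun x => \big[Order.max/0]_(i <- s | P i) F i x).
Proof.
move=> HF; elim: s => [|i s IH].
  under eq_fun do rewrite big_nil; exact: cst_continuous.
under eq_fun do rewrite big_cons.
case: (P i); last exact: IH.
by move=> x; apply: (@continuous_max _ _ (F i) (fun y => \big[Order.max/0]_(j <- s | P j) F j y)); [exact: HF|exact: IH].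
Qed.

Lemma cont_mulc (c : R) (F : X -> R) : continuous F -> continuous (fun x => c * F x).
Proof. by move=> HF x; apply: cvgMl_tmp; exact: HF. Qed.

Lemma cont_norm (F : X -> R) : continuous F -> continuous (fun x => `|F x|).
Proof. by move=> HF x; apply: cvg_norm; exact: HF. Qed.

Lemma cont_sub (F G : X -> R) : continuous F -> continuous G -> continuous (fun x => F x - G x).
Proof. by move=> HF HG x; apply: cvgB; [exact: HF|exact: HG]. Qed.

Lemma cont_compR (F : X -> R) (g : R -> R) : continuous F -> continuous g -> continuous (fun x => g (F x)).
Proof. by move=> HF Hg x; apply: continuous_comp; [exact: HF|exact: Hg]. Qed.

End Cont.

Lemma cont_pow (R : realType) (q : R) : 0 < q -> continuous (fun a : R => `|a| `^ q).
Proof.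
move=> q0 a; have [->|a0] := eqVneq a 0.
  apply/cvgrPdist_le => eps eps0 /=.
  rewrite normr0 powR0 ?gt_eqF//.
  have d0 : 0 < eps `^ q^-1 by apply: powR_gt0.
  near=> x.
  rewrite sub0r normrN ger0_norm ?powR_ge0//.
  have -> : eps = (eps `^ q^-1) `^ q by rewrite -powRrM mulVf ?gt_eqF// powRr1 ?ltW.
  apply: ge0_ler_powR; [exact: ltW|by rewrite nnegrE|by rewrite nnegrE ltW|].
  apply: ltW; near: x; exists (eps `^ q^-1) => // y /=; by rewrite sub0r normrN.
have na0 : 0 < `|a| by rewrite normr_gt0.
apply: (@cvg_trans _ ((expR (q * ln `|x|)) @[x --> a])).
  apply: near_eq_cvg; near=> x.
  rewrite /powR gt_eqF; first by rewrite mulrC.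
  near: x; apply: (@cvgr_gt _ _ _ _ (fun x : R => `|x|) `|a|) => //.
  exact: (@norm_continuous _ R^o).
rewrite /powR (gt_eqF na0).
apply: (@continuous_comp _ _ _ (fun x : R => q * ln `|x|) expR); last exact: continuous_expR.
apply: cvgMl_tmp.
have h1 : {for a, continuous (fun x : R => `|x|)} := @norm_continuous _ R^o a.
have := continuous_comp h1 (continuous_ln na0).
by [].
Unshelve. all: end_near. Qed.


Section Graph.
Variables (R : realType) (T : finType) (e : rel T) (p : R).
Hypothesis p0 : 0 < p.

Definition balls (v : T) : {set {set T}} :=
  [set B : {set T} | `[< exists r : R, 0 <= r /\ ball_set e v r = B >]].

Definition avgB (f : T -> R) (B : {set T}) : R :=
  (#|B|%:R)^-1 * \sum_(u in B) `|f u|.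

Lemma avgB_ge0 f B : 0 <= avgB f B.
Proof. by rewrite /avgB mulr_ge0 ?invr_ge0 ?sumr_ge0. Qed.

Lemma in_ball_self v (r : R) : 0 <= r -> v \in ball_set e v r.
Proof. by move=> r0; rewrite inE; apply/asboolP; exists [::]. Qed.

Lemma ball_in_balls v (r : R) : 0 <= r -> ball_set e v r \in balls v.
Proof. by move=> r0; rewrite inE; apply/asboolP; exists r. Qed.

Lemma maxfun_char f v (r0 : R) : 0 <= r0 ->
  (forall r, 0 <= r -> ball_avg e f v r <= ball_avg e f v r0) ->
  maxfun e f v = ball_avg e f v r0.
Proof.
move=> r00 H; rewrite /maxfun; apply/le_anti/andP; split.
  apply: ge_sup; first by exists (ball_avg e f v r0), r0.
  by move=> x [r r0' <-]; apply: H.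
apply: ub_le_sup; last by exists r0.
by exists (ball_avg e f v r0) => x [r r0' <-]; apply: H.
Qed.

Lemma exists_r0 f v : exists2 r0 : R, 0 <= r0 &
  \big[Order.max/0]_(B in balls v) avgB f B = ball_avg e f v r0.
Proof.
have Pj : ball_set e v (0:R) \in balls v by apply: ball_in_balls.
have [B0 HB0 ->] := @eq_bigmax _ _ _ 0 _ (fun B => B \in balls v) (avgB f) Pj
  (fun B _ => avgB_ge0 f B).
by move: HB0; rewrite unfold_in inE => /asboolP [r0 [r00 <-]]; exists r0.
Qed.

Lemma maxfunE f v : maxfun e f v = \big[Order.max/0]_(B in balls v) avgB f B.
Proof.
have [r0 r00 E] := exists_r0 f v.
rewrite E; apply: maxfun_char => // r r0'.
rewrite -E (_ : ball_avg e f v r = avgB f (ball_set e v r)) //.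
exact: (le_bigmax_cond _ _ (ball_in_balls v r r0')).
Qed.

Lemma maxfun_max f v : exists2 r0 : R, 0 <= r0 &
  forall r, 0 <= r -> ball_avg e f v r <= ball_avg e f v r0.
Proof.
have [r0 r00 E] := exists_r0 f v.
exists r0 => // r r0'.
rewrite -E (_ : ball_avg e f v r = avgB f (ball_set e v r)) //.
exact: (le_bigmax_cond _ _ (ball_in_balls v r r0')).
Qed.

Lemma avg_affine (f : T -> R) (k c : R) v (r : R) : 0 <= r -> (forall u, 0 <= f u) -> 0 <= k -> 0 <= c ->
  ball_avg e (fun u => k * f u + c) v r = k * ball_avg e f v r + c.
Proof.
move=> r0 f0 k0 c0; rewrite /ball_avg.
have cp : (0 < #|ball_set e v r|)%N by apply/card_gt0P; exists v; apply: in_ball_self.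
have cn : (#|ball_set e v r|%:R : R) != 0 by rewrite pnatr_eq0 -lt0n.
under eq_bigr do rewrite ger0_norm ?addr_ge0 ?mulr_ge0//.
under [X in _ = k * (_ * X) + _]eq_bigr do rewrite ger0_norm//.
rewrite big_split /= sumr_const -mulr_sumr mulrDr mulrCA; congr (_ + _).
by rewrite -[c *+ _]mulr_natr mulrCA mulVf// mulr1.
Qed.

Lemma maxfun_affine (f : T -> R) (k c : R) v : (forall u, 0 <= f u) -> 0 <= k -> 0 <= c ->
  maxfun e (fun u => k * f u + c) v = k * maxfun e f v + c.
Proof.
move=> f0 k0 c0; have [r0 r00 H] := maxfun_max f v.
rewrite (maxfun_char f v r0 r00 H) (@maxfun_char (fun u => k * f u + c) v r0 r00) ?avg_affine// => r r0'.
by rewrite !avg_affine// lerD2r ler_wpM2l// H.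
Qed.

Lemma maxfun_abs (f : T -> R) : maxfun e (fun u => `|f u|) = maxfun e f.
Proof.
apply: funext => v; rewrite /maxfun; congr sup; apply: eq_imagel => r _.
by rewrite /ball_avg; under eq_bigr do rewrite normr_id.
Qed.


Lemma edge_diff_ge0 (g : T -> R) S : 0 <= edge_diff g S.
Proof. exact: bigmax_ge_id. Qed.

Lemma edge_diff_shift (g : T -> R) (c : R) S :
  edge_diff (fun x => g x + c) S = edge_diff g S.
Proof.
apply: eq_bigr => x _; apply: eq_bigr => y _.
by rewrite opprD addrACA subrr addr0.
Qed.

Lemma edge_diff_scale (g : T -> R) (k : R) S : 0 <= k ->
  edge_diff (fun x => k * g x) S = k * edge_diff g S.
Proof.
move=> k0.
have hm : {morph (fun x => k * x) : a b / Order.max a b >-> Order.max a b}.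
  by move=> a b /=; rewrite maxr_pMr.
rewrite /edge_diff (big_morph _ hm (mulr0 k)); apply: eq_bigr => x _.
rewrite (big_morph _ hm (mulr0 k)); apply: eq_bigr => y _.
by rewrite -mulrBr normrM (ger0_norm k0).
Qed.

Lemma edge_diff_abs (g : T -> R) S :
  edge_diff (fun x => `|g x|) S <= edge_diff g S.
Proof.
apply: le_bigmax2 => x _; apply: le_bigmax2 => y _; exact: ler_dist_dist.
Qed.

Lemma edge_diff_pair (g : T -> R) x y :
  `|g x - g y| <= edge_diff g [set x; y].
Proof.
apply: (bigmax_sup x); first by rewrite !inE eqxx.
apply: (bigmax_sup y); first by rewrite !inE eqxx orbT.
exact: lexx.
Qed.

Lemma edge_diff_const (c : R) (S : {set T}) : edge_diff (fun _ : T => c) S = 0.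
Proof.
apply: bigmax_eq_id => x _; rewrite bigmax_le // => y _.
by rewrite subrr normr0.
Qed.

Definition SigP (g : T -> R) := \sum_(S : {set T} | is_edge e S) (edge_diff g S) `^ p.

Lemma SigP_ge0 g : 0 <= SigP g.
Proof. by apply: sumr_ge0 => S _; apply: powR_ge0. Qed.

Lemma Varp_ge0 (g : T -> R) : 0 <= Varp e p g.
Proof. exact: powR_ge0. Qed.

Lemma Varp_shift (g : T -> R) (c : R) : Varp e p (fun x => g x + c) = Varp e p g.
Proof. by rewrite /Varp; under eq_bigr do rewrite edge_diff_shift. Qed.

Lemma Varp_scale (g : T -> R) (k : R) : 0 <= k ->
  Varp e p (fun x => k * g x) = k * Varp e p g.
Proof.
move=> k0; rewrite /Varp.
under eq_bigr do rewrite edge_diff_scale// powRM// ?edge_diff_ge0//.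
rewrite -mulr_sumr powRM ?powR_ge0//; last by apply: sumr_ge0 => S _; apply: powR_ge0.
by rewrite -powRrM mulfV ?gt_eqF// powRr1.
Qed.

Lemma Varp_abs (g : T -> R) : Varp e p (fun x => `|g x|) <= Varp e p g.
Proof.
rewrite /Varp; apply: ge0_ler_powR.
- by rewrite invr_ge0 ltW.
- by rewrite nnegrE; apply: sumr_ge0 => S _; apply: powR_ge0.
- by rewrite nnegrE; apply: sumr_ge0 => S _; apply: powR_ge0.
apply: ler_sum => S _; apply: ge0_ler_powR.
- exact: ltW.
- by rewrite nnegrE edge_diff_ge0.
- by rewrite nnegrE edge_diff_ge0.
exact: edge_diff_abs.
Qed.

Lemma Varp_const (c : R) : Varp e p (fun _ : T => c) = 0.
Proof.
rewrite /Varp big1 ?powR0 ?invr_eq0 ?gt_eqF// => S _.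
by rewrite edge_diff_const powR0 ?gt_eqF.
Qed.

Lemma Varp_edge (g : T -> R) x y : e x y -> `|g x - g y| <= Varp e p g.
Proof.
move=> exy; apply: (le_trans (edge_diff_pair g x y)).
have Ed : is_edge e [set x; y].
  by apply/existsP; exists x; apply/existsP; exists y; rewrite eqxx exy.
set d := edge_diff g [set x; y].
have d0 : 0 <= d by apply: edge_diff_ge0.
have -> : d = (d `^ p) `^ p^-1 by rewrite -powRrM mulfV ?gt_eqF// powRr1.
rewrite /Varp; apply: ge0_ler_powR.
- by rewrite invr_ge0 ltW.
- by rewrite nnegrE powR_ge0.
- by rewrite nnegrE; apply: sumr_ge0 => S _; apply: powR_ge0.
rewrite (bigD1 [set x; y]%SET) //= lerDl.
by apply: sumr_ge0 => S _; apply: powR_ge0.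
Qed.

Lemma path_bound (g : T -> R) u s : path e u s ->
  g (last u s) <= g u + (size s)%:R * Varp e p g.
Proof.
elim: s u => [|w s IH] u /=; first by rewrite mul0r addr0.
move=> /andP [euw ps]; have := IH w ps.
have := Varp_edge g u w euw.
have := ler_norm (g w - g u); rewrite -normrN opprB.
rewrite -addn1 natrD mulrDl mul1r.
lra.
Qed.

Lemma short_path u v : connect e u v ->
  exists s, [/\ path e u s, last u s = v & (size s <= #|T|)%N].
Proof.
move=> /connectP [s ps ->].
case: (shortenP ps) => s' ps' us' _.
exists s'; split => //.
have := max_card (mem (u :: s')); rewrite (card_uniqP us') /=.
by move/ltnW.
Qed.


Lemma edge_diff_cont (X : topologicalType) (H : X -> T -> R) S :
  (forall v, continuous (fun x => H x v)) ->
  continuous (fun x => edge_diff (H x) S).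
Proof.
move=> HH; apply: cont_bigmax => i; apply: cont_bigmax => j.
by apply: cont_norm; apply: cont_sub.
Qed.

Lemma Varp_cont (X : topologicalType) (H : X -> T -> R) :
  (forall v, continuous (fun x => H x v)) ->
  continuous (fun x => Varp e p (H x)).
Proof.
move=> HH.
have -> : (fun x => Varp e p (H x)) = fun x =>
    `|\sum_(S | is_edge e S) `|edge_diff (H x) S| `^ p| `^ p^-1.
  apply: funext => x; rewrite /Varp.
  under [in RHS]eq_bigr => S _ do rewrite (ger0_norm (edge_diff_ge0 _ _)).
  by rewrite ger0_norm //; apply: sumr_ge0 => S _; apply: powR_ge0.
apply: (@cont_compR _ _ _ (fun a : R => `|a| `^ p^-1)); last by apply: cont_pow; rewrite invr_gt0.
apply: cont_sum => S.
apply: (@cont_compR _ _ _ (fun a : R => `|a| `^ p)); last exact: cont_pow.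
exact: edge_diff_cont.
Qed.

Lemma maxfun_cont v : continuous (fun g : {ptws T -> R} => maxfun e g v).
Proof.
have -> : (fun g : {ptws T -> R} => maxfun e g v) =
  fun g => \big[Order.max/0]_(B in balls v) avgB g B.
  by apply: funext => g; rewrite maxfunE.
apply: cont_bigmax => B; apply: cont_mulc; apply: cont_sum => u.
apply: cont_norm; exact: (@proj_continuous T (fun _ => R) u).
Qed.

End Graph.

Local Close Scope classical_set_scope.
Local Open Scope ring_scope.

Theorem proposition4p1 (R : realType) (T : finType) (e : rel T) (p : R) :
  simple_graph e -> connected_graph e -> (2 <= #|T|)%N -> 0 < p ->
  exists f : T -> R,
    [/\ (forall v, 0 <= f v), 0 < Varp e p f &
        ((Varp e p (maxfun e f)) / (Varp e p f))%:E = CGp e p].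
Proof.
move=> [esym eirr] conn T2 p0.
set n := #|T|.
have [x0 _] : exists x0 : T, x0 \in T.
  by apply/card_gt0P; apply: leq_trans T2.
pose F := fun g : {ptws T -> R} => Varp e p (maxfun e g).
pose K : set {ptws T -> R} :=
  ([set g | forall i, `[0, n%:R]%classic (g i)] `&`
   (fun g : {ptws T -> R} => Varp e p g) @^-1` [set x | x = 1])%classic.
have norm : forall f : T -> R, 0 < Varp e p (fun x => `|f x|) ->
    exists2 g, K g & Varp e p (maxfun e f) / Varp e p f <= F g.
  move=> f Va.
  pose a := fun x => `|f x|.
  have aE : forall x, a x = `|f x| by [].
  have aE' : (fun x => `|f x|) = a by [].
  clearbody a.
  have a0 : forall x, 0 <= a x by move=> x; rewrite aE; exact: normr_ge0.
  have [xm _ Exm] := @eq_bigmin _ _ _ (\sum_i a i) x0 predT a isT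
    (fun i _ => ltac:(rewrite (bigD1 i) //= lerDl; apply: sumr_ge0 => j _; exact: a0)).
  have Hmin : forall i, a xm <= a i by move=> i; rewrite -Exm; exact: bigmin_le.
  pose c := a xm.
  have cE : c = a xm by [].
  clearbody c.
  pose l := Varp e p a.
  have lE : l = Varp e p a by [].
  clearbody l.
  have l0 : 0 < l by rewrite lE -aE'.
  pose h := fun x => a x - c.
  have hE : forall x, h x = a x - c by [].
  have hE' : (fun x => a x - c) = h by [].
  clearbody h.
  have h0 : forall x, 0 <= h x by move=> x; rewrite hE subr_ge0 cE; exact: Hmin.
  have hV : Varp e p h = l by rewrite -hE' Varp_shift.
  pose g := fun x => l^-1 * h x.
  have gE : forall x, g x = l^-1 * h x by [].
  have gE' : (fun x => l^-1 * h x) = g by [].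
  clearbody g.
  have g0 : forall x, 0 <= g x.
    move=> x; rewrite gE; apply: mulr_ge0; last exact: h0.
    rewrite invr_ge0; exact: ltW.
  have gV : Varp e p g = 1.
    rewrite -gE' (@Varp_scale R T e p p0); last by rewrite invr_ge0; exact: ltW.
    rewrite hV mulVf //; exact: lt0r_neq0.
  have gxm : g xm = 0 by rewrite gE hE cE subrr mulr0.
  have gb : forall v, g v <= n%:R.
    move=> v; have [s [ps ls ss]] := @short_path T e xm v (conn xm v).
    have := @path_bound R T e p p0 g xm s ps.
    rewrite ls gV gxm add0r mulr1 => /le_trans; apply.
    by rewrite ler_nat.
  exists g.
    split; last exact: gV.
    by move=> i /=; rewrite in_itv /= g0 gb.
  have Mh : forall v, maxfun e h v = l * maxfun e g v.
    move=> v; have -> : g = fun x => l^-1 * h x + 0.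
      by apply: funext => x; rewrite addr0 gE.
    rewrite maxfun_affine //; last by rewrite invr_ge0; exact: ltW.
    rewrite addr0 mulrA mulfV ?mul1r //; exact: lt0r_neq0.
  have Mf : maxfun e f = fun v => l * maxfun e g v + c.
    rewrite -maxfun_abs; apply: funext => v.
    have -> : (fun u => `|f u|) = fun x => 1 * h x + c.
      by apply: funext => x; rewrite mul1r hE subrK aE.
    by rewrite maxfun_affine ?Mh ?mul1r // cE.
  rewrite Mf Varp_shift (@Varp_scale R T e p p0); last exact: ltW.
  have Vf : l <= Varp e p f by rewrite lE -aE'; exact: Varp_abs.
  have F0 : 0 <= F g by exact: Varp_ge0.
  rewrite ler_pdivrMr; last exact: lt_le_trans l0 Vf.
  rewrite mulrC; apply: ler_wpM2l; [exact: F0|exact: Vf].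
have const : forall f : T -> R, Varp e p (fun x => `|f x|) <= 0 ->
    Varp e p (maxfun e f) = 0.
  move=> f V0.
  have V0' : Varp e p (fun x => `|f x|) = 0.
    apply/le_anti/andP; split; [exact: V0 | exact: Varp_ge0].
  have hb : forall u v, `|f v| <= `|f u|.
    move=> u v; have [s [ps ls _]] := @short_path T e u v (conn u v).
    have := @path_bound R T e p p0 (fun x => `|f x|) u s ps.
    rewrite ls V0' mulr0 addr0; exact.
  have cst : forall v, `|f v| = `|f x0|.
    move=> v; apply/le_anti/andP; split; exact: hb.
  rewrite -maxfun_abs.
  have -> : (fun u => `|f u|) = fun x => 0 * (fun _ : T => (0:R)) x + `|f x0|.
    apply: funext => x; rewrite mul0r add0r; exact: cst.
  have -> : maxfun e (fun x => 0 * (fun _ : T => (0:R)) x + `|f x0|) = fun _ => `|f x0|.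
    apply: funext => v.
    rewrite (@maxfun_affine R T e (fun _ => 0) 0 `|f x0| v (fun _ => lexx 0) (lexx 0) (normr_ge0 _)).
    by rewrite mul0r add0r.
  exact: Varp_const.
have Fc : continuous F.
  apply: (@Varp_cont R T e p p0 _ (fun g : {ptws T -> R} => maxfun e g)) => v.
  exact: maxfun_cont.
have Kc : compact K.
  apply: compact_closedI.
    have tk := (@tychonoff T (fun _ => R) (fun _ => `[0, n%:R]%classic) (fun _ => @segment_compact R 0 n%:R)).
    exact: tk.
  apply: preimage_closed; last exact: closed_eq.
  move=> g _; apply: (@Varp_cont R T e p p0 _ (fun g : {ptws T -> R} => g)) => v.
  exact: (@proj_continuous T (fun _ => R) v).
have [y yx0] : exists y : T, y != x0.
  move: T2; rewrite (cardD1 x0) inE add1n ltnS => /card_gt0P [y].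
  by rewrite !inE => /andP [hy _]; exists y.
pose f1 := fun x : T => if x == x0 then (1:R) else 0.
have V1 : 0 < Varp e p (fun x => `|f1 x|).
  have [s [ps ls _]] := @short_path T e x0 y (conn x0 y).
  move: ps ls; case: s => [|w s] /=.
    by move=> _ E; rewrite E eqxx in yx0.
  move=> /andP [ex0w _] _.
  have wx0 : w != x0 by apply: contraTneq ex0w => ->; rewrite eirr.
  apply: lt_le_trans (@Varp_edge R T e p p0 _ x0 w ex0w).
  rewrite /f1 eqxx (negbTE wx0) normr1 normr0 subr0 normr1; exact: ltr01.
have [g1 Kg1 _] := norm f1 V1.
pose A := (F @` K)%classic.
have A0 : (A !=set0)%classic by exists (F g1), g1.
have cA : compact A := continuous_compact (continuous_subspaceT Fc) Kc.
have hsA : has_sup A := compact_has_sup A0 cA.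
have [gs Kgs Fgs] : A (sup A).
  have clA : closed A := compact_closed (@Rhausdorff R) cA.
  have := closure_sup A0 hsA.2; rewrite -((closure_id A).1 clA); exact.
have ub : forall g, K g -> F g <= F gs.
  move=> g Kg; rewrite Fgs; apply: (sup_upper_bound hsA); exists g => //.
have [Kgs1 Kgs2] := Kgs.
have Vgs : Varp e p gs = 1 := Kgs2.
exists gs; split.
- move=> v; have := Kgs1 v; rewrite /= in_itv /= => /andP [h _]; exact: h.
- rewrite Vgs; exact: ltr01.
rewrite Vgs divr1; apply/le_anti/andP; split.
  apply: ereal_sup_ubound; exists gs; first by rewrite /= Vgs; exact: ltr01.
  by rewrite Vgs divr1.
apply: ge_ereal_sup => _ [f Vf <-]; rewrite lee_fin.
have [V1'|V1'] := ltrP 0 (Varp e p (fun x => `|f x|)).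
  have [g Kg H] := norm f V1'; exact: le_trans H (ub g Kg).
rewrite (const f V1') mul0r; exact: Varp_ge0.
Qed.
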